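(* Let $\mathbf{A}\in\mathbb{R}^{(\ell n)\times(qn)}$ be a block matrix with $\ell\times q$ blocks of size $n\times n$, with distinct nonzero blocks $\mathbf{A}_1,\dots,\mathbf{A}_p$. Suppose each $\mathbf{A}_k$ has upper bandwidth $u_k$ and lower bandwidth $\ell_k$, and set $b_u=\max_k u_k$, $b_\ell=\max_k \ell_k$. Let $r_2$ be the second entry of the multilinear rank of the tensor associated with $\mathbf{A}$. Then $$r_2\le n+\sum_{i=1}^{b_u}(n-i)+\sum_{j=1}^{b_\ell}(n-j).$$
   Context: Blocks: $\mathbf{A}^{(\gamma,\delta)}_{\alpha\beta}=\mathbf{A}_{(\gamma-1)n+\alpha,(\delta-1)n+\beta}$; $\eta_k$ is the number of block positions at which $\mathbf{A}_k$ occurs. A matrix $\mathbf{M}\in\mathbb{R}^{n\times n}$ has upper bandwidth $u$ and lower bandwidth $l$ if $u,l$ are the smallest nonnegative integers such that $\mathbf{M}_{ij}=0$ whenever $j-i>u$ or $i-j>l$. The associated tensor $\mathcal{A}\in\mathbb{R}^{n\times p\times n}$ has entries $\mathcal{A}_{ikj}=\sqrt{\eta_k}[\mathbf{A}_k]_{ij}$, and $r_2=\mathrm{rank}(\mathbf{A}_{(2)})$ where $\mathbf{A}_{(2)}\in\mathbb{R}^{p\times n^2}$ has $k$th row $\mathrm{vec}(\sqrt{\eta_k}\mathbf{A}_k)^\top$. *)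

(* Defs.v *)
From HB Require Import structures.
From mathcomp Require Import all_boot all_order all_algebra.
From mathcomp Require Import reals.
Set Implicit Arguments. Unset Strict Implicit. Unset Printing Implicit Defensive.
Import Order.TTheory GRing.Theory Num.Theory.
Local Open Scope ring_scope.

(* Block (g,d) of a (ell*n) x (q*n) matrix: entry (a,b) is
   A_{g*n+a, d*n+b} (0-based), i.e. A^{(g,d)}_{ab} of the paper. *)
Definition blk (R : Type) (ell q n : nat) (A : 'M[R]_(ell * n, q * n))
  (g : 'I_ell) (d : 'I_q) : 'M[R]_n :=
  \matrix_(a < n, b < n) A (mxvec_index g a) (mxvec_index d b).

Definition eta (R : eqType) (ell q n : nat) (A : 'M[R]_(ell * n, q * n))
  (M : 'M[R]_n) : nat :=
  #|[set gd : 'I_ell * 'I_q | blk A gd.1 gd.2 == M]|.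

(* vec: column-stacking vectorization, as a row vector of length n*n. *)
Definition vecc (R : Type) (n : nat) (M : 'M[R]_n) : 'rV[R]_(n * n) :=
  mxvec M^T.

(* The mode-2 unfolding A_(2) of the associated tensor:
   k-th row is vec(sqrt(eta_k) A_k)^T. *)
Definition unfold2 (R : rcfType) (ell q n p : nat) (A : 'M[R]_(ell * n, q * n))
  (Ak : 'I_p -> 'M[R]_n) : 'M[R]_(p, n * n) :=
  \matrix_(k < p) vecc (Num.sqrt (eta A (Ak k))%:R *: Ak k).

(* r_2 = rank of A_(2) (second entry of the multilinear rank). *)
Definition r2 (R : rcfType) (ell q n p : nat) (A : 'M[R]_(ell * n, q * n))
  (Ak : 'I_p -> 'M[R]_n) : nat := \rank (unfold2 A Ak).

Definition is_upper_bandwidth (R : ringType) (n : nat) (M : 'M[R]_n) (u : nat) : Prop :=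
  (forall i j : 'I_n, (i + u < j)%N -> M i j = 0) /\
  (forall u' : nat, (forall i j : 'I_n, (i + u' < j)%N -> M i j = 0) -> (u <= u')%N).

Definition is_lower_bandwidth (R : ringType) (n : nat) (M : 'M[R]_n) (l : nat) : Prop :=
  (forall i j : 'I_n, (j + l < i)%N -> M i j = 0) /\
  (forall l' : nat, (forall i j : 'I_n, (j + l' < i)%N -> M i j = 0) -> (l <= l')%N).

(* Main.v *)
Require Import Defs.
From HB Require Import structures.
From mathcomp Require Import all_boot all_order all_algebra.
From mathcomp Require Import reals.
Import Order.TTheory GRing.Theory Num.Theory.
From mathcomp Require Import zify.

Lemma count_lt (n d : nat) : (\sum_(b < n) ((b + d < n) : nat) = n - d)%N.
Proof.
rewrite -(big_mkord xpredT (fun b => ((b + d < n) : nat))).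
have hle : (n - d <= n)%N by apply: leq_subr.
rewrite (@big_cat_nat _ _ _ (n - d) 0 n _ _ (leq0n _) hle) /=.
rewrite (eq_big_nat _ _ (F2 := fun _ => 1%N)); last first.
  by move=> i /andP[_ hi]; have -> : (i + d < n)%N by lia.
rewrite sum_nat_const_nat muln1 subn0.
rewrite big1_seq ?addn0 // => i /andP[_]; rewrite mem_iota => /andP[h1 h2].
by have -> : (i + d < n)%N = false by lia.
Qed.

Lemma count_diag (n D : nat) :
  (#|[set ab : 'I_n * 'I_n | (ab.2 < ab.1) && (ab.1 <= ab.2 + D)]|
    <= \sum_(1 <= i < D.+1) (n - i))%N.
Proof.
set X := [set _ | _].
pose f := fun ab : 'I_n * 'I_n => ((inord (ab.1 - ab.2) : 'I_D.+1), ab.2).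
pose Y := [set db : 'I_D.+1 * 'I_n | (0 < db.1) && (db.2 + db.1 < n)].
have inj : {in X &, injective f}.
  move=> [a b] [a' b']; rewrite !inE /= => /andP[h1 h2] /andP[h1' h2'] [e1 e2].
  subst b'.
  have := congr1 val e1 => /=; rewrite !inordK; try lia.
  move=> e; congr pair; apply: val_inj => /=; lia.
rewrite -(card_in_imset inj).
apply: (leq_trans (subset_leq_card (B := Y) _)).
  apply/subsetP => x /imsetP [[a b]]; rewrite inE /= => /andP[h1 h2] ->.
  rewrite inE /= inordK; last lia.
  have := ltn_ord a; lia.
rewrite -sum1_card.
rewrite (eq_bigl (fun db : 'I_D.+1 * 'I_n => (0 < db.1) && (db.2 + db.1 < n))%N);
  last by move=> x; rewrite inE.
rewrite big_mkcond.
rewrite -(pair_bigA _ (fun (d : 'I_D.+1) (b : 'I_n) => if (0 < d) && (b + d < n) then 1 else 0)%N) /=.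
rewrite big_ord_recl /= big1 ?add0n; last by [].
rewrite big_add1 /= big_mkord; apply: leq_sum => i _.
rewrite -(count_lt n i.+1) leq_eqVlt; apply/orP; left; apply/eqP.
by apply: eq_bigr => b _ /=; case: (b + _ < n)%N.
Qed.

Local Open Scope ring_scope.

Lemma rank_support (F : fieldType) (m N : nat) (M : 'M[F]_(m, N)) (T : {set 'I_N}) :
  (forall k c, c \notin T -> M k c = 0) -> (\rank M <= #|T|)%N.
Proof.
move=> HT.
pose B : 'M[F]_(#|T|, N) := \matrix_(t < #|T|, c < N) ((enum_val t == c)%:R).
pose D : 'M[F]_(m, #|T|) := \matrix_(k, t) M k (enum_val t).
have -> : M = D *m B.
  apply/matrixP => k c; rewrite !mxE.
  under eq_bigr do rewrite !mxE.
  rewrite -(big_enum_val (fun x => M k x * (x == c)%:R)).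
  case: (boolP (c \in T)) => hc.
    rewrite (bigD1 c) //= eqxx mulr1 big1 ?addr0 // => x /andP[_ /negbTE ->].
    by rewrite mulr0.
  rewrite HT // big1 // => x hx; have /negbTE -> : x != c.
    by apply/eqP => e; move: hc; rewrite -e hx.
  by rewrite mulr0.
exact: leq_trans (mxrankM_maxr _ _) (rank_leq_row _).
Qed.

Lemma cardU_leq (T : finType) (A B : {set T}) : (#|A :|: B| <= #|A| + #|B|)%N.
Proof. by rewrite -cardsUI leq_addr. Qed.

Theorem corollary2 (R : realType) (ell q n p : nat)
  (A : 'M[R]_(ell * n, q * n)) (Ak : 'I_p -> 'M[R]_n)
  (Ak_inj : injective Ak)
  (Ak_nz : forall k, Ak k != 0)
  (Ak_blocks : forall k, exists g d, blk A g d = Ak k)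
  (blocks_Ak : forall g d, blk A g d != 0 -> exists k, blk A g d = Ak k)
  (u l : 'I_p -> nat)
  (hu : forall k, is_upper_bandwidth (Ak k) (u k))
  (hl : forall k, is_lower_bandwidth (Ak k) (l k)) :
  let bu := (\max_(k < p) u k)%N in
  let bl := (\max_(k < p) l k)%N in
  (r2 A Ak <= n + \sum_(1 <= i < bu.+1) (n - i) + \sum_(1 <= j < bl.+1) (n - j))%N.
Proof.
cbv zeta.
set bu := (\max_(k < p) u k)%N.
set bl := (\max_(k < p) l k)%N.
pose Tp := [set ab : 'I_n * 'I_n | (ab.1 <= ab.2 + bu)%N && (ab.2 <= ab.1 + bl)%N].
pose T := [set mxvec_index ab.1 ab.2 | ab in Tp].
apply: (leq_trans (@rank_support _ _ _ _ T _)).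
  move=> k c; rewrite mxE; case: (mxvec_indexP c) => a b hab.
  rewrite /vecc mxvecE !mxE.
  have hnot : ~~ ((a <= b + bu)%N && (b <= a + bl)%N).
    apply/negP => h; have hin : mxvec_index a b \in T.
      by apply/imsetP; exists (a, b) => //; rewrite inE.
    by rewrite hin in hab.
  have hub : (u k <= bu)%N by rewrite /bu /bl; apply: leq_bigmax.
  have hlb : (l k <= bl)%N by rewrite /bu /bl; apply: leq_bigmax.
  case: (boolP (a <= b + bu)%N) => h1.
    have h2 : (a + l k < b)%N by move: hnot; rewrite h1 /= -ltnNge; lia.
    by rewrite (proj1 (hl k) b a h2) mulr0.
  have h2 : (b + u k < a)%N by lia.
  by rewrite (proj1 (hu k) b a h2) mulr0.
apply: (leq_trans (leq_imset_card _ _)).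
pose T0 := [set ab : 'I_n * 'I_n | ab.1 == ab.2].
pose Tpl := [set ab : 'I_n * 'I_n | (ab.2 < ab.1)%N && (ab.1 <= ab.2 + bu)%N].
pose Tml := [set ab : 'I_n * 'I_n | (ab.2 < ab.1)%N && (ab.1 <= ab.2 + bl)%N].
pose sw := fun ab : 'I_n * 'I_n => (ab.2, ab.1).
have sub : Tp \subset T0 :|: Tpl :|: sw @: Tml.
  apply/subsetP => [[a b]]; rewrite !inE /= => /andP[h1 h2].
  case: (ltngtP a b) => h.
  - apply/orP; right; apply/imsetP; exists (b, a) => //; rewrite inE /=.
    apply/andP; split; lia.
  - by apply/orP; left; apply/orP; right; rewrite /=.
  - by apply/orP; left; apply/orP; left; apply/eqP; apply: val_inj.
apply: (leq_trans (subset_leq_card sub)).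
apply: leq_trans (cardU_leq _ (T0 :|: Tpl) (sw @: Tml)) _; rewrite -addnA addnA; apply: leq_add.
  apply: leq_trans (cardU_leq _ T0 Tpl) _; apply: leq_add; last exact: count_diag.
  have : T0 \subset [set (a, a) | a in 'I_n].
    apply/subsetP => [[a b]]; rewrite inE /= => /eqP <-.
    by apply/imsetP; exists a.
  move/subset_leq_card => h; apply: (leq_trans h).
  by apply: (leq_trans (leq_imset_card _ _)); rewrite cardT size_enum_ord.
by apply: (leq_trans (leq_imset_card _ _)); exact: count_diag.
Qed.
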